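(* Let $r$ be a non-negative integer. If $r\neq 0$, then $$\sum_{k = 1}^\infty \frac{(-1)^{k(r-1)} \big(\frac{27}{5}\big)^k}{k^2\binom{3k}k F_r^{2k} } = 6\arctan^2 \bigg(\frac{\sqrt 3 }{2\sqrt[3]{\alpha^{2r}} + (-1)^{r}} \bigg) - \frac{1}{2}\log ^2 \bigg( \frac{\sqrt 5\,\alpha ^r F_r }{\big(\sqrt[3]{\alpha^{2r}} - ( - 1)^{r} \big)^3 } \bigg),$$ and if $r\neq 1$, then $$\sum_{k = 1}^\infty \frac{( - 1)^{kr} 27^k }{k^2 \binom{3k}k L_r^{2k} } = 6\arctan ^2 \bigg( \frac{ \sqrt 3 }{2\sqrt[3]{\alpha^{2r}} - ( - 1)^r } \bigg) - \frac{1}{2}\log ^2\bigg( \frac{\alpha ^r L_r }{\big(\sqrt[3]{\alpha^{2r}} + ( - 1)^r \big)^3 } \bigg).$$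
   Context: $F_n$ and $L_n$ are the Fibonacci and Lucas numbers: $F_0=0$, $F_1=1$, $L_0=2$, $L_1=1$, and $X_n=X_{n-1}+X_{n-2}$ for both sequences. $\alpha=(1+\sqrt5)/2$ is the golden ratio. $\sqrt[3]{t}$ denotes the real cube root. *)

(* Defs.v *)
From Stdlib Require Import Reals.
From Coquelicot Require Import Coquelicot.
Open Scope R_scope.

Fixpoint fib (n : nat) : nat :=
  match n with
  | O => 0%nat
  | S m => match m with
           | O => 1%nat
           | S p => (fib m + fib p)%nat
           end
  end.

Fixpoint lucas (n : nat) : nat :=
  match n with
  | O => 2%nat
  | S m => match m with
           | O => 1%nat
           | S p => (lucas m + lucas p)%nat
           end
  end.

Definition alpha : R := (1 + sqrt 5) / 2.

Definition cbrt (t : R) : R :=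
  if Rlt_dec 0 t then Rpower t (1/3)
  else if Rlt_dec t 0 then - Rpower (- t) (1/3) else 0.

(* Main.v *)
Require Import Defs.
From Stdlib Require Import Reals Lra Lia Psatz.
From Coquelicot Require Import Coquelicot.
Open Scope R_scope.

Ltac fix_inr := repeat match goal with |- context [match ?a with 0%nat => 1 | S _ => INR ?a + 1 end] =>
   change (match a with 0%nat => 1 | S _ => INR a + 1 end) with (INR (S a)) end; rewrite ?S_INR.

Lemma INR1_ne a : INR a + 1 <> 0.
Proof. generalize (pos_INR a); lra. Qed.
Lemma INR1_pos a : 0 < INR a + 1.
Proof. generalize (pos_INR a); lra. Qed.
Lemma fact_ne a : INR (Factorial.fact a) <> 0.
Proof. apply not_0_INR, Factorial.fact_neq_0. Qed.

Lemma plusR (x y : R) : plus x y = x + y. Proof. reflexivity. Qed.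
Lemma minusR (x y : R) : minus x y = x - y. Proof. reflexivity. Qed.
Lemma scalR (x y : R) : scal x y = x * y. Proof. reflexivity. Qed.
Lemma oppR (x : R) : opp x = - x. Proof. reflexivity. Qed.
Ltac toR := match goal with |- @eq _ ?x ?y => change (@eq R x y) end.
Ltac rnorm := rewrite ?plusR, ?minusR, ?scalR, ?oppR.

Lemma is_RInt_plusR (f g : R -> R) a b If Ig :
  is_RInt f a b If -> is_RInt g a b Ig -> is_RInt (fun y => f y + g y) a b (If + Ig).
Proof. apply (is_RInt_plus (V:=R_NormedModule)). Qed.
Lemma is_RInt_scalR (f : R -> R) a b k If :
  is_RInt f a b If -> is_RInt (fun y => k * f y) a b (k * If).
Proof. apply (is_RInt_scal (V:=R_NormedModule)). Qed.
Lemma is_RInt_deriveR (f df : R -> R) a b :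
  (forall x, Rmin a b <= x <= Rmax a b -> is_derive f x (df x)) ->
  (forall x, Rmin a b <= x <= Rmax a b -> continuous df x) ->
  is_RInt df a b (f b - f a).
Proof. apply (is_RInt_derive (V:=R_CompleteNormedModule)). Qed.

Lemma is_RInt_val (f : R -> R) a b l l' : is_RInt f a b l -> l = l' -> is_RInt f a b l'.
Proof. intros H ->; exact H. Qed.

Lemma contR (f : R -> R) (x : R) : ex_derive f x -> continuous f x.
Proof. apply (ex_derive_continuous (K:=R_AbsRing) (V:=R_NormedModule)). Qed.

Lemma cont_pow_poly a b (x : R) : continuous (fun t => t^a * (1-t)^b) x.
Proof. apply contR; auto_derive; auto. Qed.

Lemma beta_int (b a : nat) :
  is_RInt (fun t => t^a * (1-t)^b) 0 1
    (INR (Factorial.fact a) * INR (Factorial.fact b) / INR (Factorial.fact (a+b+1))).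
Proof.
  revert a; induction b as [|b IH]; intros.
  - eapply is_RInt_val; [apply (is_RInt_deriveR (fun t => t^(S a) / (INR a + 1)))|].
    + intros x _. auto_derive; [easy|]. fix_inr. field. apply INR1_ne.
    + intros; apply cont_pow_poly.
    + rewrite Nat.add_0_r, Nat.add_1_r.
      rewrite pow1, pow_i by lia. rewrite fact_simpl, mult_INR, S_INR. simpl.
      field. split; [apply fact_ne| apply INR1_ne].
  - assert (H0 : is_RInt
       (fun t => (INR a + 1) * (t^a*(1-t)^(S b)) - (INR b + 1) * (t^(S a) * (1-t)^b)) 0 1
       (1^(S a) * (1-1)^(S b) - 0^(S a) * (1-0)^(S b))).
    { apply (is_RInt_deriveR (fun t => t^(S a) * (1-t)^(S b))).
      + intros x _. auto_derive; auto. fix_inr. simpl. unfold Rminus. ring.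
      + intros x _. apply contR; auto_derive; auto. }
    assert (H1 := IH (S a)).
    assert (H2 := is_RInt_plusR _ _ _ _ _ _ H0 (is_RInt_scalR _ _ _ (INR b + 1) _ H1)).
    assert (H3 := is_RInt_scalR _ _ _ (/ (INR a + 1)) _ H2).
    eapply is_RInt_val; [eapply is_RInt_ext; [|apply H3]|].
    + intros x _. cbv beta. toR. field. apply INR1_ne.
    + toR. rewrite Rminus_diag, pow1, !pow_i by lia.
      replace (S a + b + 1)%nat with (a + S b + 1)%nat by lia.
      rewrite (fact_simpl a), (fact_simpl b), !mult_INR, !S_INR.
      field. split; [apply fact_ne| apply INR1_ne].
Qed.

Definition bc (n : nat) : R := Binomial.C (3*n) n.
Definition acoef (n : nat) : R := match n with O => 0 | S _ => / (INR n ^ 2 * bc n) end.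

Lemma bc_fact n : bc n = INR (Factorial.fact (3*n)) /
   (INR (Factorial.fact n) * INR (Factorial.fact (2*n))).
Proof. unfold bc, Binomial.C. replace (3*n - n)%nat with (2*n)%nat by lia. reflexivity. Qed.

Lemma bc_pos n : 0 < bc n.
Proof.
  rewrite bc_fact. apply Rdiv_lt_0_compat; [|apply Rmult_lt_0_compat];
  apply lt_0_INR, Factorial.lt_O_fact.
Qed.

Lemma PSd_coef n : PS_derive acoef n =
  INR (Factorial.fact n) * INR (Factorial.fact (2*n+2)) / INR (Factorial.fact (n + (2*n+2) + 1)).
Proof.
  unfold PS_derive, acoef. rewrite bc_fact.
  replace (3 * S n)%nat with (n + (2*n+2) + 1)%nat by lia.
  replace (2 * S n)%nat with (2*n+2)%nat by lia.
  rewrite (fact_simpl n), mult_INR.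
  assert (INR (S n) <> 0) by (apply not_0_INR; lia).
  field. repeat split; try apply fact_ne; auto.
Qed.

Definition Phi (y : R) : R := RInt (fun t => (1-t)^2 / (1 - y*t*(1-t)^2)) 0 1.

Lemma tbound t : 0 <= t <= 1 -> 0 <= t*(1-t)^2 <= 4/27.
Proof.
  intros Ht. split.
  - apply Rmult_le_pos; [lra| apply pow2_ge_0].
  - assert (0 <= (3*t-1)^2*(4-3*t)) by (apply Rmult_le_pos; [apply pow2_ge_0|lra]).
    nra.
Qed.

Lemma sum_SnR (a : nat -> R) n : sum_n a (S n) = sum_n a n + a (S n).
Proof. exact (@sum_Sn R_AbelianMonoid a n). Qed.
Lemma sum_OR (a : nat -> R) : sum_n a 0 = a 0%nat.
Proof. exact (@sum_O R_AbelianMonoid a). Qed.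

Lemma psum_int y N : is_RInt (fun t => sum_n (fun n => y^n * (t^n * (1-t)^(2*n+2))) N) 0 1
   (sum_n (fun n => PS_derive acoef n * y^n) N).
Proof.
  induction N.
  - apply is_RInt_ext with (f := fun t => y^0 * (t^0 * (1-t)^(2*0+2))).
    { intros. rewrite sum_OR. reflexivity. }
    rewrite sum_OR. eapply is_RInt_val; [apply is_RInt_scalR, beta_int|].
    toR. rewrite PSd_coef. ring.
  - apply is_RInt_ext with (f := fun t => sum_n (fun n => y^n * (t^n * (1-t)^(2*n+2))) N +
          y^(S N) * (t^(S N) * (1-t)^(2*(S N)+2))).
    { intros. rewrite sum_SnR. reflexivity. }
    rewrite sum_SnR. apply is_RInt_plusR; auto.
    eapply is_RInt_val; [apply is_RInt_scalR, beta_int|].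
    toR. rewrite PSd_coef. ring.
Qed.

Lemma psum_closed y t N : 1 - y*t*(1-t)^2 <> 0 ->
  sum_n (fun n => y^n * (t^n * (1-t)^(2*n+2))) N =
  (1-t)^2 * (1 - (y*t*(1-t)^2)^(S N)) / (1 - y*t*(1-t)^2).
Proof.
  intros Hz. induction N.
  - rewrite sum_OR. simpl. toR. field. contradict Hz. rewrite <- Hz. ring.
  - rewrite sum_SnR, IHN.
    set (z := y*t*(1-t)^2).
    replace (y ^ S N * (t ^ S N * (1 - t) ^ (2 * S N + 2))) with ((1-t)^2 * z^(S N)).
    2:{ unfold z. rewrite pow_add, pow_mult, !Rpow_mult_distr. ring. }
    change (z ^ S (S N)) with (z * z^(S N)). toR. field. unfold z. auto.
Qed.

Lemma Phi_series y : Rabs y < 27/4 -> is_series (fun n => PS_derive acoef n * y^n) (Phi y).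
Proof.
  intros Hy. set (rho := Rabs y * 4 / 27).
  assert (Hr0 : 0 <= rho) by (unfold rho; generalize (Rabs_pos y); lra).
  assert (Hr1 : rho < 1) by (unfold rho; lra).
  assert (Hz : forall t, 0 <= t <= 1 -> Rabs (y*t*(1-t)^2) <= rho).
  { intros t Ht. destruct (tbound t Ht). rewrite Rmult_assoc, Rabs_mult.
    rewrite (Rabs_right (t*(1-t)^2)) by lra. unfold rho.
    generalize (Rabs_pos y); nra. }
  assert (Hz1 : forall t, 0 <= t <= 1 -> 1 - rho <= 1 - y*t*(1-t)^2).
  { intros t Ht. specialize (Hz t Ht). apply Rabs_le_between in Hz. lra. }
  assert (Hex : ex_RInt (fun t => (1-t)^2 / (1 - y*t*(1-t)^2)) 0 1).
  { apply (ex_RInt_continuous (V:=R_CompleteNormedModule)). intros t Ht.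
    rewrite Rmin_left, Rmax_right in Ht by lra.
    apply contR. auto_derive. specialize (Hz1 t Ht). lra. }
  assert (HP := RInt_correct _ _ _ Hex). fold (Phi y) in HP.
  assert (Hbound : forall N, Rabs (sum_n (fun n => PS_derive acoef n * y^n) N - Phi y)
                     <= rho ^ (S N) / (1 - rho)).
  { intros N.
    assert (H1 := is_RInt_plusR _ _ _ _ _ _ HP (is_RInt_scalR _ _ _ (-1) _ (psum_int y N))).
    assert (H2 : is_RInt (fun t => (1-t)^2 * (y*t*(1-t)^2)^(S N) / (1 - y*t*(1-t)^2)) 0 1
                   (Phi y + -1 * sum_n (fun n => PS_derive acoef n * y ^ n) N)).
    { eapply is_RInt_ext; [|apply H1]. intros t Ht.
      rewrite Rmin_left, Rmax_right in Ht by lra.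
      assert (Hd : 1 - y*t*(1-t)^2 <> 0) by (specialize (Hz1 t (conj (Rlt_le _ _ (proj1 Ht)) (Rlt_le _ _ (proj2 Ht)))); lra).
      cbv beta. toR. rewrite psum_closed by exact Hd. field. exact Hd. }
    rewrite Rabs_minus_sym. replace (Phi y - sum_n (fun n => PS_derive acoef n * y ^ n) N)
      with (RInt (fun t => (1-t)^2 * (y*t*(1-t)^2)^(S N) / (1 - y*t*(1-t)^2)) 0 1).
    2:{ rewrite (is_RInt_unique _ _ _ _ H2). toR. ring. }
    replace (rho ^ S N / (1 - rho)) with ((1 - 0) * (rho ^ S N / (1 - rho))) by ring.
    apply abs_RInt_le_const; [lra| eexists; exact H2|].
    intros t Ht. specialize (Hz t Ht). specialize (Hz1 t Ht).
    assert (Ht2 : 0 <= (1-t)^2 <= 1) by (split; [apply pow2_ge_0| nra]).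
    unfold Rdiv. rewrite !Rabs_mult, Rabs_inv, <- (RPow_abs (y * t * (1 - t) ^ 2)).
    rewrite (Rabs_right ((1-t)^2)) by lra.
    rewrite (Rabs_right (1 - y*t*(1-t)^2)) by lra.
    assert (Hp : Rabs (y * t * (1 - t) ^ 2) ^ S N <= rho ^ S N).
    { apply pow_incr. split; [apply Rabs_pos| exact Hz]. }
    assert (Hi : / (1 - y * t * (1 - t) ^ 2) <= / (1 - rho)).
    { apply Rinv_le_contravar; lra. }
    assert (0 <= Rabs (y * t * (1 - t) ^ 2) ^ S N) by (apply pow_le, Rabs_pos).
    assert (0 <= / (1 - y * t * (1 - t) ^ 2)) by (apply Rlt_le, Rinv_0_lt_compat; lra).
    assert (0 <= rho ^ S N) by (apply pow_le; lra).
    apply Rle_trans with (1 * (rho ^ S N) * / (1 - rho)); [|lra].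
    apply Rmult_le_compat; try lra.
    - apply Rmult_le_pos; lra.
    - apply Rmult_le_compat; lra. }
  assert (Hlim : is_lim_seq (fun N => rho ^ S N / (1 - rho)) 0).
  { assert (G : is_lim_seq (fun N => rho ^ N) 0).
    { apply is_lim_seq_geom. rewrite Rabs_right; lra. }
    apply (is_lim_seq_scal_l _ (/ (1 - rho))) in G.
    apply (proj1 (is_lim_seq_incr_1 _ _)) in G.
    replace (Finite 0) with (Rbar_mult (/ (1 - rho)) 0) by (simpl; f_equal; ring).
    eapply is_lim_seq_ext; [|exact G]. intros n. simpl. unfold Rdiv. ring. }
  assert (L : is_lim_seq (sum_n (fun n => PS_derive acoef n * y ^ n)) (Phi y)).
  { apply is_lim_seq_le_le with (u := fun N => Phi y - rho ^ S N / (1 - rho))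
                                (w := fun N => Phi y + rho ^ S N / (1 - rho)).
    - intros N. specialize (Hbound N). apply Rabs_le_between in Hbound. lra.
    - replace (Finite (Phi y)) with (Finite (Phi y + - 0)) by (f_equal; ring).
      apply is_lim_seq_plus'; [apply is_lim_seq_const|].
      replace (Finite (-0)) with (Rbar_mult (-1) 0) by (simpl; f_equal; ring).
      eapply is_lim_seq_ext; [|apply is_lim_seq_scal_l, Hlim]. intros; simpl; ring.
    - replace (Finite (Phi y)) with (Finite (Phi y + 0)) by (f_equal; ring).
      apply is_lim_seq_plus'; [apply is_lim_seq_const| exact Hlim]. }
  exact L.
Qed.

Lemma bc_ratio n : bc (S n) * ((INR n + 1) * (2 * INR n + 1) * (2 * INR n + 2)) =
  bc n * ((3 * INR n + 1) * (3 * INR n + 2) * (3 * INR n + 3)).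
Proof.
  rewrite !bc_fact.
  replace (3 * S n)%nat with (S (S (S (3 * n)))) by lia.
  replace (2 * S n)%nat with (S (S (2 * n))) by lia.
  rewrite !(fact_simpl (S (S _))), !(fact_simpl (S _)), !(fact_simpl (3*n)), !(fact_simpl (2*n)), (fact_simpl n).
  rewrite !mult_INR, !S_INR, !mult_INR. simpl (INR 3). simpl (INR 2).
  field. repeat split; try apply fact_ne; try (generalize (pos_INR n); lra).
Qed.

Lemma v_bound n : (27/4)^n <= (3 * INR n + 1) * bc n.
Proof.
  induction n.
  - unfold bc, Binomial.C. simpl. lra.
  - assert (R := bc_ratio n). assert (P := bc_pos n). assert (P1 := bc_pos (S n)).
    assert (N0 := pos_INR n). rewrite S_INR. simpl pow.
    assert (HA : 27/4 * ((3 * INR n + 1) * bc n) <= (3 * (INR n + 1) + 1) * bc (S n)).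
    { apply Rmult_le_reg_r with ((INR n + 1) * (2 * INR n + 1) * (2 * INR n + 2)).
      { apply Rmult_lt_0_compat; [apply Rmult_lt_0_compat|]; lra. }
      replace ((3 * (INR n + 1) + 1) * bc (S n) * ((INR n + 1) * (2 * INR n + 1) * (2 * INR n + 2)))
        with ((3 * (INR n + 1) + 1) * (bc (S n) * ((INR n + 1) * (2 * INR n + 1) * (2 * INR n + 2)))) by ring.
      rewrite R.
      assert (0 <= INR n * bc n) by (apply Rmult_le_pos; lra).
      assert (0 <= INR n * INR n * bc n) by (apply Rmult_le_pos; nra).
      assert (0 <= INR n * INR n * INR n * bc n) by (apply Rmult_le_pos; nra).
      assert (0 <= INR n * INR n * INR n * INR n * bc n) by (apply Rmult_le_pos; nra).
      nra. }
    lra.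
Qed.

Lemma radius_ge : Rbar_le (27/4) (CV_radius acoef).
Proof.
  destruct (CV_radius_bounded acoef) as [Hub _]. apply Hub.
  exists 4. intros [|m].
  - simpl. rewrite Rmult_0_l, Rabs_R0. lra.
  - unfold acoef. assert (P := bc_pos (S m)). assert (V := v_bound (S m)).
    rewrite S_INR in *. assert (N0 := pos_INR m).
    rewrite Rabs_right.
    2:{ apply Rle_ge, Rmult_le_pos; [apply Rlt_le, Rinv_0_lt_compat; apply Rmult_lt_0_compat; nra| apply pow_le; lra]. }
    rewrite Rmult_comm. apply Rle_trans with ((3 * (INR m + 1) + 1) * bc (S m) * / ((INR m + 1) ^ 2 * bc (S m))).
    + apply Rmult_le_compat_r; [|exact V]. apply Rlt_le, Rinv_0_lt_compat; apply Rmult_lt_0_compat; nra.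
    + replace ((3 * (INR m + 1) + 1) * bc (S m) * / ((INR m + 1) ^ 2 * bc (S m)))
        with ((3 * (INR m + 1) + 1) / ((INR m + 1) ^ 2)) by (field; lra).
      apply Rmult_le_reg_r with ((INR m + 1)^2); [nra|].
      unfold Rdiv. rewrite Rmult_assoc, Rinv_l by nra. nra.
Qed.

Lemma g_derive y : Rabs y < 27/4 -> is_derive (PSeries acoef) y (Phi y).
Proof.
  intros Hy. rewrite <- (is_series_unique _ _ (Phi_series y Hy)).
  apply is_derive_PSeries. eapply Rbar_lt_le_trans; [|apply radius_ge]. simpl. exact Hy.
Qed.

Lemma s3 : sqrt 3 * sqrt 3 = 3.
Proof. apply sqrt_sqrt; lra. Qed.
Lemma s3pos : 0 < sqrt 3.
Proof. apply sqrt_lt_R0; lra. Qed.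

Lemma s3' : sqrt 3 ^ 2 = 3.
Proof. simpl. rewrite Rmult_1_r. apply s3. Qed.

Lemma atan_der (A B : R -> R) A' B' x : is_derive A x A' -> is_derive B x B' -> B x <> 0 ->
 is_derive (fun x => sqrt 3 * atan (A x / (sqrt 3 * B x))) x
   (3 * (A' * B x - A x * B') / (3 * B x ^2 + A x ^2)).
Proof.
  intros HA HB HB0.
  assert (Hs := s3). assert (Hp := s3pos).
  assert (Hv : is_derive (fun x => A x / (sqrt 3 * B x)) x
              ((A' * B x - A x * B') / (sqrt 3 * B x ^ 2))).
  { evar (d : R).
    assert (H : is_derive (fun x => A x / (sqrt 3 * B x)) x d).
    { unfold d. auto_derive.
      - split; [exists A'; exact HA|]. split; [exists B'; exact HB|].
        split; auto. apply Rmult_integral_contrapositive; split; lra.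
      - reflexivity. }
    unfold d in H. replace (Derive (fun x => A x) x) with A' in H by (symmetry; apply is_derive_unique; exact HA). replace (Derive (fun x => B x) x) with B' in H by (symmetry; apply is_derive_unique; exact HB).
    eapply is_derive_ext; [intros; reflexivity|]. 
    replace ((A' * B x - A x * B') / (sqrt 3 * B x ^ 2)) with
      (1 * A' * / (sqrt 3 * B x) + A x * (- (sqrt 3 * (1 * B')) * / (sqrt 3 * B x * (sqrt 3 * B x)))).
    exact H. field. split; lra. }
  assert (Hc := is_derive_comp atan (fun x => A x / (sqrt 3 * B x)) x _ _ (is_derive_atan _) Hv).
  assert (Hd := is_derive_scal _ x (sqrt 3) _ Hc).
  replace (3 * (A' * B x - A x * B') / (3 * B x ^ 2 + A x ^ 2)) with
    (sqrt 3 * scal ((A' * B x - A x * B') / (sqrt 3 * B x ^ 2)) (/ (1 + (A x / (sqrt 3 * B x))²))).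
  { exact Hd. }
  match goal with |- context [scal ?a ?b] => change (scal a b) with (a * b) end. unfold Rsqr.
  replace (1 + A x / (sqrt 3 * B x) * (A x / (sqrt 3 * B x))) with ((3 * B x ^2 + A x ^2) / (3 * B x^2)).
  2:{ field_simplify; [rewrite s3'; field; auto| split; lra | auto]. }
  assert (0 < 3 * B x ^ 2 + A x ^ 2).
  { assert (0 < B x ^ 2) by (apply pow2_gt_0; auto). generalize (pow2_ge_0 (A x)). lra. }
  field. repeat split; try lra.
Qed.

Lemma is_derive_minusR (f g : R -> R) x df dg : is_derive f x df -> is_derive g x dg ->
  is_derive (fun y => f y - g y) x (df - dg).
Proof. apply (is_derive_minus (K:=R_AbsRing) (V:=R_NormedModule)). Qed.
Lemma is_derive_plusR (f g : R -> R) x df dg : is_derive f x df -> is_derive g x dg ->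
  is_derive (fun y => f y + g y) x (df + dg).
Proof. apply (is_derive_plus (K:=R_AbsRing) (V:=R_NormedModule)). Qed.

Lemma sq3_ne A B : B <> 0 -> 3 * B ^ 2 + A ^ 2 <> 0.
Proof. intros. assert (0 < B^2) by (apply pow2_gt_0; auto). generalize (pow2_ge_0 A). lra. Qed.

Lemma zero_der_const (f : R -> R) a b : (forall x, a < x < b -> is_derive f x 0) ->
  forall x y, a < x < b -> a < y < b -> f x = f y.
Proof.
  intros Hd x y Hx Hy.
  destruct (MVT_gen f x y (fun _ => 0)) as [c [Hc E]].
  - intros z Hz. apply Hd. split.
    + apply Rlt_le_trans with (Rmin x y); [apply Rmin_glb_lt; lra| lra].
    + apply Rle_lt_trans with (Rmax x y); [lra| apply Rmax_lub_lt; lra].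
  - intros z Hz. apply continuity_pt_filterlim.
    apply (ex_derive_continuous (K:=R_AbsRing) (V:=R_NormedModule)).
    exists 0. apply Hd. split.
    + apply Rlt_le_trans with (Rmin x y); [apply Rmin_glb_lt; lra| lra].
    + apply Rle_lt_trans with (Rmax x y); [lra| apply Rmax_lub_lt; lra].
  - lra.
Qed.

Definition Psi (A B : R) := sqrt 3 * atan (A / (sqrt 3 * B)).

Lemma J_id u : -1 < u < 1 ->
  Psi (6*u*1 + 1 - 4*u + u^2) (1 - u^2) - Psi (6*u*0 + 1 - 4*u + u^2) (1 - u^2)
  = 3 * Psi (3*u) (2-u).
Proof.
  intros Hu.
  set (f := fun u => Psi (6*u*1 + 1 - 4*u + u^2) (1 - u^2) - Psi (6*u*0 + 1 - 4*u + u^2) (1 - u^2)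
                     - 3 * Psi (3*u) (2-u)).
  assert (f u = f 0).
  { apply (zero_der_const f (-1) 1); try lra.
    intros x Hx. unfold f, Psi.
    assert (H1 := atan_der (fun v => 6*v*1 + 1 - 4*v + v^2) (fun v => 1 - v^2) (6 - 4 + 2*x) (-(2*x)) x).
    assert (H2 := atan_der (fun v => 6*v*0 + 1 - 4*v + v^2) (fun v => 1 - v^2) (- 4 + 2*x) (-(2*x)) x).
    assert (H3 := atan_der (fun v => 3 * v) (fun v => 2 - v) 3 (-1) x).
    assert (B1 : 1 - x^2 <> 0) by nra.
    assert (B2 : 2 - x <> 0) by lra.
    cbv beta in H1, H2, H3.
    assert (D1 : is_derive (fun v => 6*v*1 + 1 - 4*v + v^2) x (6 - 4 + 2*x)) by (auto_derive; auto; ring).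
    assert (D2 : is_derive (fun v => 6*v*0 + 1 - 4*v + v^2) x (- 4 + 2*x)) by (auto_derive; auto; ring).
    assert (D3 : is_derive (fun v => 1 - v^2) x (-(2*x))) by (auto_derive; auto; ring).
    assert (D4 : is_derive (fun v => 3 * v) x 3) by (auto_derive; auto; ring).
    assert (D5 : is_derive (fun v => 2 - v) x (-1)) by (auto_derive; auto; ring).
    specialize (H1 D1 D3 B1). specialize (H2 D2 D3 B1). specialize (H3 D4 D5 B2).
    assert (H := is_derive_minusR _ _ _ _ _ (is_derive_minusR _ _ _ _ _ H1 H2) (is_derive_scal _ _ 3 _ H3)).
    eapply is_derive_ext; [intros; reflexivity|].
    match type of H with is_derive _ _ ?l => assert (Hl : l = 0); [|rewrite Hl in H; exact H] end.
    field. repeat split; apply sq3_ne; auto. }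
  unfold f in H. replace (6 * 0 * 1 + 1 - 4 * 0 + 0 ^ 2) with (6 * 0 * 0 + 1 - 4 * 0 + 0 ^ 2) in H by ring.
  unfold Psi in H at 4 5 6. replace (3 * 0) with 0 in H by ring. unfold Rdiv in H. rewrite !Rmult_0_l, atan_0 in H.
  lra.
Qed.

Definition Xf u := 27*u^3/(1+u^3)^2.
Definition Xd u := 81*u^2*(1-u^3)/(1+u^3)^3.
Definition Pp u t := (1+u)^2 - 3*u*t.
Definition Qq u t := 9*u^2*t^2 + 3*u*(1-4*u+u^2)*t + (1-u+u^2)^2.
Definition a1 u := -(1-u)/(u*(1+u)).
Definition a2 u := -(1-u)*(1+u)/(u*(1-u+u^2)).
Definition Ff u t := a1 u * ln (Pp u t) + a2 u * ln (Qq u t)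
   + 2/(1-u+u^2) * Psi (6*u*t + 1 - 4*u + u^2) (1-u^2).

Lemma quad_pos u : 0 < 1 - u + u^2.
Proof. nra. Qed.

Lemma Pp_pos u t : -1 < u < 1 -> 0 <= t <= 1 -> 0 < Pp u t.
Proof. intros. unfold Pp. destruct (Rle_dec 0 u); nra. Qed.

Lemma Qq_pos u t : -1 < u < 1 -> 0 < Qq u t.
Proof.
  intros. assert (Qq u t = ((6*u*t+1-4*u+u^2)^2 + 3*(1-u^2)^2)/4) by (unfold Qq; field).
  rewrite H0. assert (0 < (1-u^2)^2) by (apply pow2_gt_0; nra).
  generalize (pow2_ge_0 (6*u*t+1-4*u+u^2)). lra.
Qed.

Lemma cube_pos u : -1 < u -> 0 < 1 + u^3.
Proof. intros. replace (1+u^3) with ((1+u)*(1-u+u^2)) by ring. apply Rmult_lt_0_compat; [lra| apply quad_pos]. Qed.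

Lemma Ff_der u t : -1 < u < 1 -> u <> 0 -> 0 <= t <= 1 -> 1 - Xf u * t * (1-t)^2 <> 0 ->
  is_derive (Ff u) t (Xd u * ((1-t)^2 / (1 - Xf u * t * (1-t)^2))).
Proof.
  intros Hu H0 Ht HX.
  assert (HP := Pp_pos u t Hu Ht). assert (HQ := Qq_pos u t Hu).
  assert (Hq := quad_pos u). assert (Hc := cube_pos u (proj1 Hu)).
  assert (HB : 1 - u^2 <> 0) by nra.
  assert (D1 : is_derive (fun t => a1 u * ln (Pp u t) + a2 u * ln (Qq u t)) t
        (a1 u * (- 3 * u) / Pp u t + a2 u * (18 * u^2 * t + 3*u*(1-4*u+u^2)) / Qq u t)).
  { unfold Pp, Qq in *. auto_derive; [split; auto|]. field. split; lra. }
  assert (DA : is_derive (fun t => 6*u*t + 1 - 4*u + u^2) t (6*u)) by (auto_derive; auto; ring).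
  assert (DB : is_derive (fun _ : R => 1 - u^2) t 0) by (auto_derive; auto; ring).
  assert (D2 := is_derive_scal _ _ (2/(1-u+u^2)) _ (atan_der _ _ _ _ t DA DB HB)).
  assert (D := is_derive_plusR _ _ _ _ _ D1 D2).
  unfold Ff. unfold Psi. 
  match type of D with is_derive _ _ ?l => assert (Hl : l = Xd u * ((1-t)^2 / (1 - Xf u * t * (1-t)^2))); [|rewrite <- Hl; exact D] end.
  assert (H4 : 3 * (1 - u^2)^2 + (6*u*t + 1 - 4*u + u^2)^2 = 4 * Qq u t) by (unfold Qq; ring).
  rewrite H4. unfold a1, a2, Xd. unfold Xf in HX |- *. unfold Pp, Qq in *.
  assert (HX' : (1 + u ^ 3) ^ 2 - 27 * u ^ 3 * t * (1 - t) ^ 2 <> 0).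
  { replace ((1 + u ^ 3) ^ 2 - 27 * u ^ 3 * t * (1 - t) ^ 2) with
      ((1+u^3)^2 * (1 - 27 * u ^ 3 / (1 + u ^ 3) ^ 2 * t * (1 - t) ^ 2)) by (field; lra).
    apply Rmult_integral_contrapositive; split; [apply pow_nonzero; lra| exact HX]. }
  field. repeat split; lra.
Qed.

Lemma X_range u : -11/20 < u < 1 -> Rabs (Xf u) < 27/4.
Proof.
  intros Hu. unfold Xf. set (v := u^3).
  assert (Hv1 : v < 1) by (unfold v; nra).
  assert (Hv0 : -1331/8000 < v).
  { unfold v. assert (u^3 + 1331/8000 = (u + 11/20) * (u^2 - 11/20*u + 121/400)) by field.
    assert (0 < u^2 - 11/20*u + 121/400) by nra. nra. }
  assert (HD : 0 < (1+v)^2) by (apply pow2_gt_0; lra).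
  apply Rabs_def1.
  - apply Rmult_lt_reg_r with ((1+v)^2); auto. unfold Rdiv. rewrite Rmult_assoc, Rinv_l by lra. nra.
  - apply Rmult_lt_reg_r with ((1+v)^2); auto. unfold Rdiv. rewrite Rmult_assoc, Rinv_l by lra. nra.
Qed.

Lemma den_pos y t : Rabs y < 27/4 -> 0 <= t <= 1 -> 0 < 1 - y * t * (1-t)^2.
Proof.
  intros Hy Ht. destruct (tbound t Ht).
  assert (Rabs (y * t * (1-t)^2) < 1).
  { rewrite Rmult_assoc, Rabs_mult, (Rabs_right (t*(1-t)^2)) by lra.
    generalize (Rabs_pos y); nra. }
  apply Rabs_def2 in H1. lra.
Qed.

Lemma Phi_RInt y : Rabs y < 27/4 -> is_RInt (fun t => (1-t)^2 / (1 - y*t*(1-t)^2)) 0 1 (Phi y).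
Proof.
  intros Hy. apply (RInt_correct (V:=R_CompleteNormedModule)).
  apply (ex_RInt_continuous (V:=R_CompleteNormedModule)). intros t Ht.
  rewrite Rmin_left, Rmax_right in Ht by lra.
  apply contR. auto_derive. generalize (den_pos y t Hy Ht). lra.
Qed.

Definition psi u := Psi (3*u) (2-u).
Definition ell u := ln ((1-u+u^2)/(1+u)^2).
Definition hd u := 6 * psi u / (1-u+u^2) + 3*(1-u)*ell u/((1-u+u^2)*(1+u)).

Lemma main_der u : -11/20 < u < 1 -> Xd u * Phi (Xf u) = hd u.
Proof.
  intros Hu. destruct (Req_dec u 0) as [->|H0].
  - unfold Xd, hd, psi, ell, Psi. replace (3*0) with 0 by ring. unfold Rdiv.
    rewrite !Rmult_0_l, atan_0. replace ((1 - 0 + 0 ^ 2) * / (1 + 0) ^ 2) with 1 by (simpl; field).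
    rewrite ln_1. ring.
  - assert (Hu' : -1 < u < 1) by lra.
    assert (HR := X_range u Hu).
    assert (I1 := is_RInt_scalR _ _ _ (Xd u) _ (Phi_RInt _ HR)).
    assert (I2 : is_RInt (fun t => Xd u * ((1-t)^2 / (1 - Xf u * t * (1-t)^2))) 0 1 (Ff u 1 - Ff u 0)).
    { apply (is_RInt_deriveR (Ff u)); intros t Ht; rewrite Rmin_left, Rmax_right in Ht by lra.
      - apply Ff_der; auto. generalize (den_pos _ t HR Ht); lra.
      - apply contR. auto_derive. generalize (den_pos _ t HR Ht); lra. }
    rewrite <- (is_RInt_unique _ _ _ _ I1), (is_RInt_unique _ _ _ _ I2).
    assert (Hq := quad_pos u).
    assert (Hp : 0 < (1+u)^2) by (apply pow2_gt_0; lra).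
    unfold Ff. assert (J := J_id u Hu').
    replace (Psi (6 * u * 1 + 1 - 4 * u + u ^ 2) (1 - u ^ 2)) with
      (Psi (6 * u * 0 + 1 - 4 * u + u ^ 2) (1 - u ^ 2) + 3 * psi u) by (unfold psi; lra).
    unfold Pp, Qq, hd, ell.
    replace ((1 + u) ^ 2 - 3 * u * 1) with (1-u+u^2) by ring.
    replace ((1 + u) ^ 2 - 3 * u * 0) with ((1+u)^2) by ring.
    replace (9 * u ^ 2 * 1 ^ 2 + 3 * u * (1 - 4 * u + u ^ 2) * 1 + (1 - u + u ^ 2) ^ 2)
      with ((1+u)^2 * (1-u+u^2)) by ring.
    replace (9 * u ^ 2 * 0 ^ 2 + 3 * u * (1 - 4 * u + u ^ 2) * 0 + (1 - u + u ^ 2) ^ 2)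
      with ((1-u+u^2) * (1-u+u^2)) by ring.
    rewrite !ln_mult, ln_div by lra.
    unfold a1, a2. field. repeat split; lra.
Qed.

Definition hfun u := 2 * psi u ^ 2 - 1/2 * ell u ^ 2.

Lemma psi_der u : -1 < u < 2 -> is_derive psi u (3 / (2 * (1-u+u^2))).
Proof.
  intros Hu.
  assert (DA : is_derive (fun v => 3 * v) u 3) by (auto_derive; auto; ring).
  assert (DB : is_derive (fun v => 2 - v) u (-1)) by (auto_derive; auto; ring).
  assert (H := atan_der _ _ _ _ u DA DB ltac:(lra)). cbv beta in H.
  assert (Hq := quad_pos u).
  replace (3 / (2 * (1-u+u^2))) with (3 * (3 * (2 - u) - 3 * u * -1) / (3 * (2 - u) ^ 2 + (3 * u) ^ 2)).
  exact H. field. split; [lra|]. apply sq3_ne. lra.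
Qed.

Lemma ell_der u : -1 < u -> is_derive ell u (-3*(1-u)/((1-u+u^2)*(1+u))).
Proof.
  intros Hu. assert (Hq := quad_pos u). unfold ell. auto_derive.
  - assert (0 < (1+u)*((1+u)*1)) by nra.
    split; [lra|]. split; auto. apply Rmult_lt_0_compat; [nra| apply Rinv_0_lt_compat; lra].
  - assert (0 < (1+u)*((1+u)*1)) by nra. field. nra.
Qed.

Lemma hfun_der u : -1 < u < 2 -> is_derive hfun u (hd u).
Proof.
  intros Hu.
  assert (H1 := is_derive_pow _ 2 _ _ (psi_der u Hu)).
  assert (H2 := is_derive_pow _ 2 _ _ (ell_der u (proj1 Hu))).
  assert (H := is_derive_minusR _ _ _ _ _ (is_derive_scal _ _ 2 _ H1) (is_derive_scal _ _ (1/2) _ H2)).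
  unfold hfun. match type of H with is_derive _ _ ?l => replace (hd u) with l; [exact H|] end.
  unfold hd. simpl. assert (Hq := quad_pos u). field. lra.
Qed.

Lemma X_der u : -1 < u -> is_derive Xf u (Xd u).
Proof.
  intros Hu. assert (Hc := cube_pos u Hu). unfold Xf, Xd. auto_derive.
  - assert (0 < 1 + u * (u * (u * 1))) by (simpl in Hc; lra). nra.
  - simpl in Hc. field. lra.
Qed.

Lemma main_u u : -11/20 < u < 1 -> PSeries acoef (Xf u) = hfun u.
Proof.
  intros Hu.
  set (E := fun u => PSeries acoef (Xf u) - hfun u).
  assert (E u = E 0).
  { apply (zero_der_const E (-11/20) 1); try lra.
    intros x Hx.
    assert (Hc := is_derive_comp (PSeries acoef) Xf x _ _ (g_derive _ (X_range x Hx)) (X_der x ltac:(lra))).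
    assert (H := is_derive_minusR _ _ _ _ _ Hc (hfun_der x ltac:(lra))).
    match type of H with is_derive _ _ ?l => assert (Hl : l = 0); [|rewrite Hl in H; exact H] end.
    change (scal (Xd x) (Phi (Xf x))) with (Xd x * Phi (Xf x)).
    rewrite main_der by lra. ring. }
  unfold E in H. rewrite <- (Rplus_0_r (hfun u)). 
  replace (PSeries acoef (Xf 0) - hfun 0) with 0 in H.
  - lra.
  - unfold Xf. replace (27 * 0 ^ 3 / (1 + 0 ^ 3) ^ 2) with 0 by (simpl; field).
    rewrite PSeries_0. unfold hfun, psi, ell, Psi. simpl acoef.
    replace (3*0) with 0 by ring. unfold Rdiv. rewrite !Rmult_0_l, atan_0.
    replace ((1 - 0 + 0 ^ 2) * / (1 + 0) ^ 2) with 1 by (simpl; field). rewrite ln_1. ring.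
Qed.

Lemma rad_lt y : Rabs y < 27/4 -> Rbar_lt (Rabs y) (CV_radius acoef).
Proof. intros. eapply Rbar_lt_le_trans; [|apply radius_ge]. simpl. exact H. Qed.

Lemma series_inside y : Rabs y < 27/4 ->
  is_series (fun n => acoef (S n) * y ^ (S n)) (PSeries acoef y).
Proof.
  intros Hy. apply (is_series_incr_1 (K:=R_AbsRing) (V:=R_NormedModule) (fun k => acoef k * y^k)).
  assert (H := Series_correct _ (ex_series_Rabs _ (CV_disk_inside _ _ (rad_lt _ Hy)))).
  unfold PSeries. match goal with |- is_series _ ?l => replace l with (Series (fun k => acoef k * y^k)); [exact H|] end.
  match goal with |- _ = plus ?a ?b => change (plus a b) with (a + b) end. simpl. ring.
Qed.

Lemma series_u u : -11/20 < u < 1 -> is_series (fun n => acoef (S n) * Xf u ^ (S n)) (hfun u).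
Proof. intros Hu. rewrite <- main_u by exact Hu. apply series_inside, X_range, Hu. Qed.

Lemma cont_le_left (f : R -> R) a b c : a < b -> continuity_pt f b ->
  (forall u, a < u < b -> f u <= c) -> f b <= c.
Proof.
  intros Hab Hc Hle. destruct (Rle_dec (f b) c) as [|Hn]; auto. exfalso.
  destruct (Hc (f b - c)) as [d [Hd Hd2]]; [lra|].
  set (u := b - Rmin d (b - a) / 2).
  assert (Hm1 : 0 < Rmin d (b-a)) by (apply Rmin_glb_lt; lra).
  assert (Hm2 : Rmin d (b-a) <= d) by apply Rmin_l.
  assert (Hm3 : Rmin d (b-a) <= b - a) by apply Rmin_r.
  specialize (Hd2 u). simpl in Hd2. unfold R_dist in Hd2.
  assert (Hu : a < u < b) by (unfold u; lra).
  specialize (Hle u Hu).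
  assert (Rabs (f u - f b) < f b - c).
  { apply Hd2. split; [unfold D_x, no_cond; split; auto; unfold u; lra|].
    unfold u. rewrite Rabs_left by lra. lra. }
  apply Rabs_def2 in H. lra.
Qed.

Lemma derive_cont (f : R -> R) x : ex_derive f x -> continuity_pt f x.
Proof. intros. apply continuity_pt_filterlim, (ex_derive_continuous (K:=R_AbsRing) (V:=R_NormedModule)), H. Qed.

Lemma psum_ex_derive N x : -1 < x ->
  ex_derive (fun u => sum_n (fun n => acoef (S n) * Xf u ^ (S n)) N) x.
Proof.
  intros Hx. apply (ex_derive_sum_n (K:=R_AbsRing) (V:=R_NormedModule) (fun n u => acoef (S n) * Xf u ^ (S n))).
  intros k _. apply ex_derive_scal. apply ex_derive_pow. exists (Xd x). apply X_der, Hx.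
Qed.

Lemma sum_n_leR (a b : nat -> R) : (forall n, a n <= b n) -> forall N, sum_n a N <= sum_n b N.
Proof.
  intros H N. induction N; [rewrite !sum_OR; auto| rewrite !sum_SnR; specialize (H (S N)); lra].
Qed.

Lemma Xf1 : Xf 1 = 27/4.
Proof. unfold Xf. simpl. field. Qed.

Lemma sum_nonneg_le (a : nat -> R) l : (forall n, 0 <= a n) -> is_series a l ->
  forall N, sum_n a N <= l.
Proof.
  intros Hp Hs N. apply (is_lim_seq_incr_compare (sum_n a) l); [exact Hs|].
  intros n. rewrite sum_SnR. specialize (Hp (S n)). lra.
Qed.

Lemma acoef_pos n : 0 <= acoef n.
Proof.
  destruct n; simpl acoef; [lra|]. apply Rlt_le, Rinv_0_lt_compat, Rmult_lt_0_compat.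
  - apply pow2_gt_0. change (INR (S n) <> 0). apply not_0_INR. lia.
  - apply bc_pos.
Qed.

Lemma Xf_nonneg u : 0 <= u < 1 -> 0 <= Xf u.
Proof.
  intros. unfold Xf. apply Rmult_le_pos; [|apply Rlt_le, Rinv_0_lt_compat, pow2_gt_0; nra].
  apply Rmult_le_pos; [lra| apply pow_le; lra].
Qed.

Lemma series_1 : is_series (fun n => acoef (S n) * Xf 1 ^ (S n)) (hfun 1).
Proof.
  rewrite Xf1.
  set (b := fun n => acoef (S n) * (27/4) ^ (S n)).
  assert (Hb : forall n, 0 <= b n) by (intros; unfold b; apply Rmult_le_pos; [apply acoef_pos| apply pow_le; lra]).
  assert (Hi : forall N, sum_n b N <= hfun 1).
  { intros N.
    set (G := fun u => sum_n (fun n => acoef (S n) * Xf u ^ (S n)) N - hfun u).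
    assert (G 1 <= 0).
    { apply (cont_le_left G 0 1); [lra| |].
      - apply derive_cont. unfold G. apply (ex_derive_minus (K:=R_AbsRing) (V:=R_NormedModule)).
        + apply psum_ex_derive. lra.
        + exists (hd 1). apply hfun_der. lra.
      - intros u Hu. unfold G.
        assert (Hs := series_u u ltac:(lra)).
        assert (Hx := Xf_nonneg u ltac:(lra)).
        assert (sum_n (fun n => acoef (S n) * Xf u ^ (S n)) N <= hfun u).
        { apply sum_nonneg_le; auto. intros. apply Rmult_le_pos; [apply acoef_pos| apply pow_le; lra]. }
        lra. }
    unfold G in H. rewrite Xf1 in H. unfold b. lra. }
  destruct (ex_finite_lim_seq_incr (sum_n b) (hfun 1)) as [L HL]; auto.
  { intros n. rewrite sum_SnR. specialize (Hb (S n)). lra. }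
  assert (HLs : is_series b L) by exact HL.
  assert (L <= hfun 1).
  { assert (Hle := is_lim_seq_le (sum_n b) (fun _ => hfun 1) L (hfun 1) Hi HL (is_lim_seq_const _)).
    simpl in Hle. exact Hle. }
  assert (hfun 1 <= L).
  { assert (Hc : continuity_pt (fun u => hfun u - L) 1).
    { apply derive_cont. apply (ex_derive_minus (K:=R_AbsRing) (V:=R_NormedModule)).
      + exists (hd 1). apply hfun_der. lra.
      + apply (ex_derive_const (K:=R_AbsRing) (V:=R_NormedModule)). }
    assert (hfun 1 - L <= 0); [|lra].
    apply (cont_le_left (fun u => hfun u - L) 0 1); [lra|exact Hc|].
    intros u Hu. cbv beta.
    assert (Hs := series_u u ltac:(lra)).
    assert (Hx := Xf_nonneg u ltac:(lra)).
    assert (Hx2 : Xf u <= 27/4) by (generalize (X_range u ltac:(lra)); intros HH; apply Rabs_def2 in HH; lra).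
    assert (Hle := is_lim_seq_le _ _ (hfun u) L
      (sum_n_leR (fun n => acoef (S n) * Xf u ^ (S n)) b
        ltac:(intros n; unfold b; apply Rmult_le_compat_l; [apply acoef_pos| apply pow_incr; lra])) Hs HL).
    simpl in Hle. lra. }
  replace (hfun 1) with L by lra. exact HLs.
Qed.

Lemma series_all u : -11/20 < u <= 1 -> is_series (fun n => acoef (S n) * Xf u ^ (S n)) (hfun u).
Proof.
  intros Hu. destruct (Req_dec u 1) as [->|Hn]; [apply series_1| apply series_u; lra].
Qed.

Lemma Xf_ce c e : 1 <= c -> (e = 1 \/ e = -1) -> c + e <> 0 -> Xf (e / c) = 27 * e * c^3 / (c^3 + e)^2.
Proof.
  intros Hc He' Hce. assert (He : e * e = 1) by (destruct He'; subst; ring). unfold Xf.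
  assert (Hc3 : 1 <= c^3) by (replace 1 with (1^3) by ring; apply pow_incr; lra).
  assert (c^3 + e <> 0).
  { destruct He'; subst; [lra|]. assert (1 < c) by lra. nra. }
  replace ((e/c)^3) with (e / c^3).
  2:{ unfold Rdiv. rewrite Rpow_mult_distr, pow_inv. f_equal. replace (e^3) with (e*(e*e)) by ring. rewrite He. ring. }
  field. split; auto; lra.
Qed.

Lemma hfun_ce c e : 1 <= c -> (e = 1 \/ e = -1) -> c + e <> 0 ->
  hfun (e / c) = 6 * atan (sqrt 3 / (2 * c - e)) ^ 2 - 1/2 * ln ((c^3 + e) / (c + e)^3) ^ 2.
Proof.
  intros Hc He Hce. unfold hfun, psi, Psi, ell.
  assert (H3 := s3). assert (Hp := s3pos).
  assert (E1 : 3 * (e / c) / (sqrt 3 * (2 - e / c)) = e * (sqrt 3 / (2 * c - e))).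
  { assert (2 * c - e <> 0) by (destruct He; subst; lra).
    replace (3 * (e / c)) with (sqrt 3 * sqrt 3 * (e / c)) by (rewrite H3; ring).
    assert (0 < /c <= 1) by (split; [apply Rinv_0_lt_compat; lra| rewrite <- Rinv_1; apply Rinv_le_contravar; lra]).
    assert (2 - e / c <> 0) by (destruct He; subst; unfold Rdiv; nra).
    field. repeat split; lra. }
  assert (E2 : (1 - e / c + (e / c) ^ 2) / (1 + e / c) ^ 2 = (c^3 + e) / (c + e)^3).
  { destruct He; subst; field; repeat split; try lra. }
  rewrite E1, E2.
  replace (2 * (sqrt 3 * atan (e * (sqrt 3 / (2 * c - e)))) ^ 2) with
    (6 * atan (sqrt 3 / (2 * c - e)) ^ 2).
  - reflexivity.
  - destruct He; subst.
    + rewrite Rmult_1_l. replace 6 with (2 * (sqrt 3 * sqrt 3)) by (rewrite H3; ring). ring.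
    + replace (-1 * (sqrt 3 / (2 * c - -1))) with (- (sqrt 3 / (2 * c - -1))) by ring.
      rewrite atan_opp. replace 6 with (2 * (sqrt 3 * sqrt 3)) by (rewrite H3; ring). ring.
Qed.

Definition beta : R := (1 - sqrt 5) / 2.
Lemma s5 : sqrt 5 * sqrt 5 = 5.
Proof. apply sqrt_sqrt; lra. Qed.
Lemma s5_ge2 : 2 <= sqrt 5.
Proof. rewrite <- (sqrt_square 2) by lra. apply sqrt_le_1_alt. lra. Qed.
Lemma ab : alpha * beta = -1.
Proof. unfold alpha, beta. assert (H := s5). field_simplify. rewrite <- Rsqr_pow2 at 1. unfold Rsqr. rewrite H. field. Qed.
Lemma alpha2 : alpha ^ 2 = alpha + 1.
Proof. unfold alpha. assert (H := s5). simpl. field_simplify. rewrite <- Rsqr_pow2. unfold Rsqr. rewrite H. field. Qed.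
Lemma beta2 : beta ^ 2 = beta + 1.
Proof. unfold beta. assert (H := s5). simpl. field_simplify. rewrite <- Rsqr_pow2. unfold Rsqr. rewrite H. field. Qed.

Lemma lucas_binet n : INR (lucas n) = alpha ^ n + beta ^ n.
Proof.
  assert (forall k, INR (lucas k) = alpha ^ k + beta ^ k /\ INR (lucas (S k)) = alpha ^ (S k) + beta ^ (S k)).
  { clear; intros k; induction k as [|n IH].
    - split; simpl; [lra|]. unfold alpha, beta. field.
    - destruct IH as [I1 I2]. split; auto.
      replace (lucas (S (S n))) with (lucas (S n) + lucas n)%nat by reflexivity.
      rewrite plus_INR, I1, I2.
      replace (alpha ^ S (S n)) with (alpha ^ n * alpha ^ 2) by (simpl; ring).
      replace (beta ^ S (S n)) with (beta ^ n * beta ^ 2) by (simpl; ring).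
      rewrite alpha2, beta2. simpl. ring. }
  apply H.
Qed.

Lemma fib_binet n : sqrt 5 * INR (fib n) = alpha ^ n - beta ^ n.
Proof.
  assert (forall k, sqrt 5 * INR (fib k) = alpha ^ k - beta ^ k /\
                    sqrt 5 * INR (fib (S k)) = alpha ^ (S k) - beta ^ (S k)).
  { clear; intros k; induction k as [|n IH].
    - split; simpl; [lra|]. unfold alpha, beta. field.
    - destruct IH as [I1 I2]. split; auto.
      replace (fib (S (S n))) with (fib (S n) + fib n)%nat by reflexivity.
      rewrite plus_INR, Rmult_plus_distr_l, I1, I2.
      replace (alpha ^ S (S n)) with (alpha ^ n * alpha ^ 2) by (simpl; ring).
      replace (beta ^ S (S n)) with (beta ^ n * beta ^ 2) by (simpl; ring).
      rewrite alpha2, beta2. simpl. ring. }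
  apply H.
Qed.

Lemma cbrt_pos t : 0 < t -> 0 < cbrt t.
Proof. intros. unfold cbrt. destruct (Rlt_dec 0 t); [|lra]. apply exp_pos. Qed.

Lemma cbrt_cube t : 0 < t -> cbrt t ^ 3 = t.
Proof.
  intros Ht. assert (P := cbrt_pos t Ht).
  rewrite <- Rpower_pow by exact P. unfold cbrt. destruct (Rlt_dec 0 t); [|lra].
  rewrite Rpower_mult. replace (1/3 * INR 3) with 1 by (simpl; field). apply Rpower_1; auto.
Qed.

Lemma pow_term (s q L D : R) (k r : nat) : L <> 0 -> D <> 0 ->
  s ^ (k * r) * q ^ k / (D * L ^ (2 * k)) = (s ^ r * q / L ^ 2) ^ k / D.
Proof.
  intros HL HD. rewrite Nat.mul_comm, pow_mult, (pow_mult L 2 k).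
  unfold Rdiv. rewrite !Rpow_mult_distr, pow_inv.
  assert ((L^2)^k <> 0) by (apply pow_nonzero, pow_nonzero; auto).
  field. auto.
Qed.

Lemma acoef_term n y : acoef (S n) * y ^ (S n) =
   y ^ (S n) / (INR (S n) ^ 2 * Binomial.C (3 * S n) (S n)).
Proof. unfold acoef, bc. unfold Rdiv. ring. Qed.

Lemma C_ne n : INR (S n) ^ 2 * Binomial.C (3 * S n) (S n) <> 0.
Proof.
  apply Rmult_integral_contrapositive. split.
  - apply pow_nonzero. apply not_0_INR. lia.
  - assert (H := bc_pos (S n)). unfold bc in H. lra.
Qed.

Lemma alpha_gt1 : 1 < alpha.
Proof. unfold alpha. generalize s5_ge2. lra. Qed.

Lemma sign_cases r : ((-1) ^ r = 1 /\ Nat.Even r) \/ ((-1) ^ r = -1 /\ Nat.Odd r).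
Proof.
  destruct (Nat.Even_or_Odd r) as [[m ->]|[m ->]].
  - left. split; [apply pow_1_even| exists m; lia].
  - right. split; [rewrite Nat.add_1_r; apply pow_1_odd| exists m; lia].
Qed.

Lemma c_big r : (2 <= r)%nat -> 20/11 < cbrt (alpha ^ (2 * r)).
Proof.
  intros Hr. assert (Ha := alpha_gt1).
  assert (HA : alpha ^ 2 <= alpha ^ r) by (apply Rle_pow; lra || lia).
  rewrite alpha2 in HA. assert (H5 := s5_ge2).
  assert (HA2 : 5/2 <= alpha ^ r) by (assert (5/2 <= alpha + 1) by (unfold alpha; lra); lra).
  assert (Hp : 0 < alpha ^ (2 * r)) by (apply pow_lt; lra).
  assert (E : alpha ^ (2*r) = (alpha ^ r) ^ 2) by (rewrite Nat.mul_comm, pow_mult; reflexivity).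
  assert (Hc := cbrt_cube _ Hp). assert (Hc0 := cbrt_pos _ Hp).
  set (c := cbrt (alpha ^ (2 * r))) in *.
  destruct (Rlt_dec (20/11) c) as [|Hn]; auto. exfalso.
  assert (c ^ 3 <= (20/11)^3) by (apply pow_incr; lra).
  rewrite Hc, E in H. nra.
Qed.

Theorem theorem1 (r : nat) :
  (r <> 0%nat ->
   is_series
     (fun n : nat => let k := S n in
        (-1) ^ (k * (r - 1)) * (27 / 5) ^ k
        / (INR k ^ 2 * Binomial.C (3 * k) k * INR (fib r) ^ (2 * k)))
     (6 * (atan (sqrt 3 / (2 * cbrt (alpha ^ (2 * r)) + (-1) ^ r))) ^ 2
      - 1 / 2 * (ln (sqrt 5 * alpha ^ r * INR (fib r)
                     / (cbrt (alpha ^ (2 * r)) - (-1) ^ r) ^ 3)) ^ 2)) /\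
  (r <> 1%nat ->
   is_series
     (fun n : nat => let k := S n in
        (-1) ^ (k * r) * 27 ^ k
        / (INR k ^ 2 * Binomial.C (3 * k) k * INR (lucas r) ^ (2 * k)))
     (6 * (atan (sqrt 3 / (2 * cbrt (alpha ^ (2 * r)) - (-1) ^ r))) ^ 2
      - 1 / 2 * (ln (alpha ^ r * INR (lucas r)
                     / (cbrt (alpha ^ (2 * r)) + (-1) ^ r) ^ 3)) ^ 2)).
Proof.
  assert (Ha := alpha_gt1).
  set (A := alpha ^ r). set (B := beta ^ r). set (e := (-1) ^ r).
  assert (HA1 : 1 <= A) by (unfold A; rewrite <- (pow1 r); apply pow_incr; lra).
  assert (HAB : A * B = e) by (unfold A, B, e; rewrite <- Rpow_mult_distr, ab; reflexivity).
  assert (Hp : 0 < alpha ^ (2 * r)) by (apply pow_lt; lra).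
  assert (E2 : alpha ^ (2*r) = A ^ 2) by (unfold A; rewrite Nat.mul_comm, pow_mult; reflexivity).
  assert (Hc3 := cbrt_cube _ Hp). assert (Hc0 := cbrt_pos _ Hp).
  set (c := cbrt (alpha ^ (2 * r))) in *. rewrite E2 in Hc3.
  assert (Hc1 : 1 <= c).
  { destruct (Rle_dec 1 c); auto. exfalso. assert (c^3 < 1) by (assert (c < 1) by lra; simpl; nra).
    assert (1 <= A^2) by nra. lra. }
  assert (HL := lucas_binet r). assert (HF := fib_binet r). fold A B in HL, HF.
  split.
  -
    intros Hr0. set (e' := - e).
    assert (Hee : e' = 1 /\ Nat.Odd r \/ e' = -1 /\ Nat.Even r).
    { unfold e', e. destruct (sign_cases r) as [[-> ?]|[-> ?]]; [right|left]; split; auto; ring. }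
    assert (He' : e' = 1 \/ e' = -1) by tauto.
    assert (Hce : c + e' <> 0) by (destruct He'; [lra|]; destruct Hee as [[? ?]|[? Hev]]; [lra|];
        assert (20/11 < c) by (apply c_big; destruct Hev as [m ->]; lia); lra).
    assert (Hu : -11/20 < e' / c <= 1).
    { assert (Hi : 0 < / c) by (apply Rinv_0_lt_compat; lra).
      assert (Hci : c * / c = 1) by (field; lra). unfold Rdiv.
      destruct He' as [He|He]; rewrite He.
      - split; nra.
      - destruct Hee as [[? ?]|[? Hev]]; [lra|].
        assert (20/11 < c) by (apply c_big; destruct Hev as [m ->]; lia).
        split; nra. }
    assert (HAe : 0 < A^2 + e').
    { destruct Hee as [[-> ?]|[-> Hev]]; [nra|].
      assert (20/11 < c) by (apply c_big; destruct Hev as [m ->]; lia). nra. }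
    assert (HAB' : A - B <> 0).
    { intro Hz. assert (A * (A - B) = A^2 + e') by (unfold e'; rewrite <- HAB; ring). rewrite Hz in H. nra. }
    assert (HF0 : INR (fib r) <> 0) by (intro Hz; rewrite Hz, Rmult_0_r in HF; lra).
    assert (Hsgn : (-1) ^ (r - 1) = e').
    { unfold e', e. destruct r; [lia|]. simpl. replace (r - 0)%nat with r by lia. ring. }
    match goal with |- is_series _ ?l => replace l with (hfun (e'/c)) end.
    2:{ rewrite hfun_ce by auto. fold e.
      replace (2 * c + e) with (2 * c - e') by (unfold e'; ring).
      replace (c - e) with (c + e') by (unfold e'; ring).
      replace (sqrt 5 * A * INR (fib r)) with (c^3 + e').
      * reflexivity.
      * rewrite Hc3. replace (sqrt 5 * A * INR (fib r)) with (A * (sqrt 5 * INR (fib r))) by ring.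
        rewrite HF. unfold e'. rewrite <- HAB. ring. }
    eapply is_series_ext; [|apply (series_all _ Hu)].
    + intros n. cbv beta zeta. rewrite acoef_term, pow_term by (auto; apply C_ne).
      f_equal. f_equal. rewrite Xf_ce by auto. rewrite Hsgn, Hc3.
      assert (E5 : 5 * INR (fib r) ^ 2 = (A - B)^2) by (rewrite <- HF; transitivity ((sqrt 5 * sqrt 5) * INR (fib r)^2); [rewrite s5; ring| ring]).
      replace (e' * (27/5) / INR (fib r) ^ 2) with (27 * e' / (5 * INR (fib r) ^ 2)) by (field; auto).
      rewrite E5. unfold e'. rewrite <- HAB. field. split.
      * intro Hz. apply HAB'. nra.
      * intro Hz. replace (A^2 + - (A*B)) with (A * (A - B)) in Hz by ring.
        apply Rmult_integral in Hz. destruct Hz; [lra| auto].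
  -
    intros Hr1.
    assert (Hee : e = 1 /\ Nat.Even r \/ e = -1 /\ Nat.Odd r).
    { unfold e. destruct (sign_cases r) as [[-> ?]|[-> ?]]; [left|right]; split; auto. }
    assert (He : e = 1 \/ e = -1) by tauto.
    assert (Hbig : e = -1 -> 20/11 < c).
    { intros He1. destruct Hee as [[? ?]|[? Hod]]; [lra|].
      apply c_big. destruct Hod as [m ->]. destruct m; lia. }
    assert (Hce : c + e <> 0) by (destruct He; [lra|]; specialize (Hbig H); lra).
    assert (Hu : -11/20 < e / c <= 1).
    { assert (Hi : 0 < / c) by (apply Rinv_0_lt_compat; lra).
      assert (Hci : c * / c = 1) by (field; lra). unfold Rdiv.
      destruct He as [He|He]; rewrite He.
      - split; nra.
      - specialize (Hbig He). split; nra. }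
    assert (HAe : 0 < A^2 + e).
    { destruct He as [He|He]; rewrite He; [nra|]. specialize (Hbig He). nra. }
    assert (HAB' : A + B <> 0).
    { intro Hz. assert (A * (A + B) = A^2 + e) by (rewrite <- HAB; ring). rewrite Hz in H. nra. }
    assert (HL0 : INR (lucas r) <> 0) by (rewrite HL; auto).
    match goal with |- is_series _ ?l => replace l with (hfun (e/c)) end.
    2:{ rewrite hfun_ce by auto. fold e.
      replace (A * INR (lucas r)) with (c^3 + e).
      * reflexivity.
      * rewrite Hc3, HL, <- HAB. ring. }
    eapply is_series_ext; [|apply (series_all _ Hu)].
    + intros n. cbv beta zeta. rewrite acoef_term, pow_term by (auto; apply C_ne).
      f_equal. f_equal. rewrite Xf_ce by auto. fold e. rewrite Hc3, HL.
      rewrite <- HAB. field. split; auto.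
      intro Hz. replace (A^2 + A*B) with (A * (A + B)) in Hz by ring.
      apply Rmult_integral in Hz. destruct Hz; [lra| auto].
Qed.
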